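(* Let $\{\omega_m\}$ be a sequence of positive real numbers with $\omega_m\to\infty$, and let $z_m=a_m-\mathrm{i}b_m$ with $a_m,b_m\geq 0$. Suppose there exist constants $c_1, c_2>0$ such that $b_m\geq c_1 \omega_m$ and $b_m\geq c_2 a_m$ for all $m$. Then for all sufficiently large $m$, $z=z_m$ satisfies neither of the equations \[ \frac{\omega_m-z}{\omega_m+z}= e^{-\mathrm{i}z},\qquad \frac{\omega_m-z}{\omega_m+z}= -e^{-\mathrm{i}z}. \] *)

(* Defs.v *)
From Stdlib Require Import Reals.
Open Scope R_scope.

Definition Cplx : Type := (R * R)%type.
Definition RtoC (x : R) : Cplx := (x, 0).
Definition Ci : Cplx := (0, 1).
Definition Cadd (z w : Cplx) : Cplx := (fst z + fst w, snd z + snd w).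
Definition Copp (z : Cplx) : Cplx := (- fst z, - snd z).
Definition Csub (z w : Cplx) : Cplx := Cadd z (Copp w).
Definition Cmul (z w : Cplx) : Cplx :=
  (fst z * fst w - snd z * snd w, fst z * snd w + snd z * fst w).
Definition Cinv (z : Cplx) : Cplx :=
  (fst z / (fst z ^ 2 + snd z ^ 2), - snd z / (fst z ^ 2 + snd z ^ 2)).
Definition Cdiv (z w : Cplx) : Cplx := Cmul z (Cinv w).
Definition Cexp (z : Cplx) : Cplx := (exp (fst z) * cos (snd z), exp (fst z) * sin (snd z)).

(* Main.v *)
Require Import Defs.
From Stdlib Require Import Reals Lra Psatz.
Open Scope R_scope.

Definition n2 (z : Cplx) : R := fst z ^ 2 + snd z ^ 2.

Lemma n2_mul z w : n2 (Cmul z w) = n2 z * n2 w.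
Proof. destruct z, w; unfold n2, Cmul; simpl; ring. Qed.

Lemma n2_inv w : n2 w <> 0 -> n2 (Cinv w) = / n2 w.
Proof. destruct w as [x y]; unfold n2, Cinv; simpl; intros H. field. intro C; apply H; lra. Qed.

Lemma n2_opp z : n2 (Copp z) = n2 z.
Proof. destruct z; unfold n2, Copp; simpl; ring. Qed.

Lemma n2_exp z : n2 (Cexp z) = exp (fst z) ^ 2.
Proof.
  destruct z as [x y]; unfold n2, Cexp; simpl.
  pose proof (sin2_cos2 y) as H. unfold Rsqr in H.
  replace (exp x * cos y * (exp x * cos y * 1) + exp x * sin y * (exp x * sin y * 1))
    with (exp x * exp x * (sin y * sin y + cos y * cos y)) by ring.
  rewrite H. ring.
Qed.

Lemma key (w a b K : R) : 0 < w -> 0 <= a -> 0 < b -> K <= b ->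
  (w + a) ^ 2 + b ^ 2 <= K * b ^ 2 ->
  exp (- b) ^ 2 < ((w - a) ^ 2 + b ^ 2) * / ((w + a) ^ 2 + b ^ 2).
Proof.
  intros Hw Ha Hb HK HD.
  set (D := (w + a) ^ 2 + b ^ 2).
  assert (HDp : 0 < D) by (unfold D; nra).
  pose proof (exp_ineq1_le b) as He.
  assert (HE : 0 < exp b) by apply exp_pos.
  rewrite exp_Ropp.
  assert (Hsq : K < exp b ^ 2) by nra.
  assert (HE2 : 0 < exp b ^ 2) by (apply pow_lt; lra).
  apply (Rmult_lt_reg_r (exp b ^ 2 * D)). apply Rmult_lt_0_compat; lra.
  replace ((/ exp b) ^ 2 * (exp b ^ 2 * D)) with D by (field; lra).
  replace (((w - a) ^ 2 + b ^ 2) * / D * (exp b ^ 2 * D)) with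
    (((w - a) ^ 2 + b ^ 2) * exp b ^ 2) by (field; lra).
  assert (Hn : b ^ 2 <= (w - a) ^ 2 + b ^ 2) by (pose proof (pow2_ge_0 (w - a)); lra).
  assert (Hb2 : 0 < b ^ 2) by (apply pow_lt; lra).
  assert (K * b ^ 2 < exp b ^ 2 * b ^ 2) by (apply Rmult_lt_compat_r; lra).
  assert (exp b ^ 2 * b ^ 2 <= exp b ^ 2 * ((w - a) ^ 2 + b ^ 2)) by (apply Rmult_le_compat_l; lra).
  unfold D in *. lra.
Qed.

Theorem lemma5p2 (omega a b : nat -> R) :
  (forall m, 0 < omega m) ->
  cv_infty omega ->
  (forall m, 0 <= a m /\ 0 <= b m) ->
  (exists c1 c2 : R, 0 < c1 /\ 0 < c2 /\
     forall m, b m >= c1 * omega m /\ b m >= c2 * a m) ->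
  exists N : nat, forall m : nat, (N <= m)%nat ->
    let z : Cplx := (a m, - b m) in
    let lhs : Cplx := Cdiv (Csub (RtoC (omega m)) z) (Cadd (RtoC (omega m)) z) in
    lhs <> Cexp (Copp (Cmul Ci z)) /\
    lhs <> Copp (Cexp (Copp (Cmul Ci z))).
Proof.
  intros Hw Hinf Hab [c1 [c2 [Hc1 [Hc2 Hc]]]].
  set (s := / c1 + / c2).
  set (K := s ^ 2 + 1).
  destruct (Hinf (K / c1)) as [N HN].
  exists N. intros m Hm z lhs.
  specialize (HN m Hm). destruct (Hab m) as [Ha Hb0]. destruct (Hc m) as [H1 H2].
  pose proof (Hw m) as Hwm.
  assert (Hb : 0 < b m) by nra.
  assert (HK : K <= b m).
  { apply Rmult_lt_compat_l with (r := c1) in HN; [|lra].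
    replace (c1 * (K / c1)) with K in HN by (field; lra). lra. }
  assert (Hwa : omega m + a m <= s * b m).
  { unfold s.
    assert (omega m <= / c1 * b m).
    { apply (Rmult_le_reg_l c1); [lra|]. rewrite <- Rmult_assoc, Rinv_r; lra. }
    assert (a m <= / c2 * b m).
    { apply (Rmult_le_reg_l c2); [lra|]. rewrite <- Rmult_assoc, Rinv_r; lra. }
    lra. }
  assert (HD : (omega m + a m) ^ 2 + b m ^ 2 <= K * b m ^ 2).
  { unfold K. assert (0 <= omega m + a m) by lra. nra. }
  pose proof (key (omega m) (a m) (b m) K Hwm Ha Hb HK HD) as Hk.
  assert (Hl : n2 lhs = ((omega m - a m) ^ 2 + b m ^ 2) * / ((omega m + a m) ^ 2 + b m ^ 2)).
  { unfold lhs, Cdiv. rewrite n2_mul, n2_inv.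
    - unfold n2, z, Csub, Cadd, Copp, RtoC; simpl. f_equal; try ring; f_equal; ring.
    - unfold n2, z, Cadd, RtoC; simpl. nra. }
  assert (Hr : n2 (Cexp (Copp (Cmul Ci z))) = exp (- b m) ^ 2).
  { rewrite n2_exp. unfold z, Copp, Cmul, Ci; simpl. repeat f_equal; ring. }
  split; intro E.
  - apply (f_equal n2) in E. rewrite Hl, Hr in E. lra.
  - apply (f_equal n2) in E. rewrite n2_opp, Hl, Hr in E. lra.
Qed.
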